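(* If $G$ is a quasitopological group, then $G$ and $\tau(G)$ have exactly the same open subgroups. In particular, for any based space $X$, $\pi_1^{qtop}(X)$ and $\pi_1^{\tau}(X)$ have the same open subgroups.
   Context: A quasitopological group is a group with a topology in which inversion is continuous and multiplication is separately continuous in each variable. $F_M(S)$ is the free (Markov) topological group on a space $S$. For a group with topology $G$, $\tau(G)$ is $G$ with the quotient topology with respect to the multiplication epimorphism $m_G:F_M(G)\to G$ sending each generator $g$ to $g$. For a based space $X$, $\pi_1^{qtop}(X)$ is $\pi_1(X)$ with the quotient topology from the based loop space $\Omega(X)$ (compact-open topology) via $\alpha\mapsto[\alpha]$; it is a quasitopological group. $\pi_1^{\tau}(X)=\tau(\pi_1^{qtop}(X))$. *)

(* Defs.v *)
From Stdlib Require Import Reals List Relations Classical ClassicalEpsilon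
  FunctionalExtensionality PropExtensionality.
Open Scope R_scope.

Set Implicit Arguments.

Definition is_topology {X : Type} (O : (X -> Prop) -> Prop) : Prop :=
  O (fun _ => True) /\
  (forall U V, O U -> O V -> O (fun x => U x /\ V x)) /\
  (forall F : (X -> Prop) -> Prop,
      (forall U, F U -> O U) -> O (fun x => exists U, F U /\ U x)).

Definition cont {X Y : Type} (OX : (X -> Prop) -> Prop)
  (OY : (Y -> Prop) -> Prop) (f : X -> Y) : Prop :=
  forall V, OY V -> OX (fun x => V (f x)).

Definition gen_open {X : Type} (B : (X -> Prop) -> Prop) (W : X -> Prop) : Prop :=
  forall O, is_topology O -> (forall V, B V -> O V) -> O W.

Definition prod_open {A B : Type} (OA : (A -> Prop) -> Prop)
  (OB : (B -> Prop) -> Prop) (W : A * B -> Prop) : Prop :=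
  forall a b, W (a, b) ->
    exists U V, OA U /\ OB V /\ U a /\ V b /\
      (forall a' b', U a' -> V b' -> W (a', b')).

Definition qt_compact {X : Type} (O : (X -> Prop) -> Prop) (K : X -> Prop) : Prop :=
  forall F : (X -> Prop) -> Prop,
    (forall U, F U -> O U) -> (forall x, K x -> exists U, F U /\ U x) ->
    exists l : list (X -> Prop),
      (forall U, In U l -> F U) /\ (forall x, K x -> exists U, In U l /\ U x).

Definition is_group {G : Type} (mul : G -> G -> G) (inv : G -> G) (e : G) : Prop :=
  (forall x y z, mul x (mul y z) = mul (mul x y) z) /\
  (forall x, mul e x = x /\ mul x e = x) /\
  (forall x, mul (inv x) x = e /\ mul x (inv x) = e).

Definition is_subgroup {G : Type} (mul : G -> G -> G) (inv : G -> G) (e : G)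
  (H : G -> Prop) : Prop :=
  H e /\ (forall x y, H x -> H y -> H (mul x y)) /\ (forall x, H x -> H (inv x)).

Definition is_quasitop_group {G : Type} (mul : G -> G -> G) (inv : G -> G) (e : G)
  (O : (G -> Prop) -> Prop) : Prop :=
  is_group mul inv e /\ is_topology O /\ cont O O inv /\
  (forall a, cont O O (fun x => mul a x)) /\ (forall a, cont O O (fun x => mul x a)).

Definition is_top_group {G : Type} (mul : G -> G -> G) (inv : G -> G) (e : G)
  (O : (G -> Prop) -> Prop) : Prop :=
  is_group mul inv e /\ is_topology O /\ cont O O inv /\
  cont (prod_open O O) O (fun p => mul (fst p) (snd p)).

(* words: (x,true) = x, (x,false) = x^-1 *)
Definition word (S : Type) := list (S * bool).

Inductive red1 {S : Type} : word S -> word S -> Prop :=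
| red1_intro : forall (u v : word S) x b,
    red1 (u ++ (x, b) :: (x, negb b) :: v) (u ++ v).

Definition weq {S : Type} : word S -> word S -> Prop := clos_refl_sym_trans _ red1.

(* F(S) = words modulo free reduction; elements are equivalence classes *)
Definition FG (S : Type) := { P : word S -> Prop | exists w, P = weq w }.

Definition fg_cls {S : Type} (w : word S) : FG S :=
  exist _ (weq w) (ex_intro _ w eq_refl).

Definition fg_rep {S : Type} (p : FG S) : word S :=
  proj1_sig (constructive_indefinite_description _ (proj2_sig p)).

Definition winv {S : Type} (w : word S) : word S :=
  rev (map (fun xb => (fst xb, negb (snd xb))) w).

Definition fg_mul {S : Type} (p q : FG S) : FG S := fg_cls (fg_rep p ++ fg_rep q).
Definition fg_inv {S : Type} (p : FG S) : FG S := fg_cls (winv (fg_rep p)).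
Definition fg_one {S : Type} : FG S := fg_cls nil.
Definition fg_sigma {S : Type} (x : S) : FG S := fg_cls ((x, true) :: nil).

(* F_M(S): F(S) with the finest group topology making sigma : S -> F(S)
   continuous, i.e. the topology generated by all such group topologies
   (the supremum of group topologies is a group topology). *)
Definition FM_open {S : Type} (OS : (S -> Prop) -> Prop) : (FG S -> Prop) -> Prop :=
  gen_open (fun V => exists T : (FG S -> Prop) -> Prop,
     is_top_group (@fg_mul S) (@fg_inv S) (@fg_one S) T /\ cont OS T (@fg_sigma S) /\ T V).

Definition word_eval {G : Type} (mul : G -> G -> G) (inv : G -> G) (e : G)
  (w : word G) : G :=
  fold_right (fun (xb : G * bool) (acc : G) => mul (if snd xb then fst xb else inv (fst xb)) acc) e w.

Definition m_G {G : Type} (mul : G -> G -> G) (inv : G -> G) (e : G)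
  (p : FG G) : G := word_eval mul inv e (fg_rep p).

(* open sets of tau(G): the quotient topology w.r.t. m_G *)
Definition tau_open {G : Type} (mul : G -> G -> G) (inv : G -> G) (e : G)
  (OG : (G -> Prop) -> Prop) (U : G -> Prop) : Prop :=
  FM_open OG (fun p => U (m_G mul inv e p)).

Definition R_open (U : R -> Prop) : Prop :=
  forall x, U x -> exists eps, eps > 0 /\ forall y, Rabs (y - x) < eps -> U y.

Definition II := { t : R | 0 <= t <= 1 }.

Definition I_open (V : II -> Prop) : Prop :=
  exists U, R_open U /\ forall t, V t <-> U (proj1_sig t).

Definition i0 : II := exist _ 0 (conj (Rle_refl 0) Rle_0_1).
Definition i1 : II := exist _ 1 (conj Rle_0_1 (Rle_refl 1)).

Lemma clamp_prf (r : R) : 0 <= Rmax 0 (Rmin 1 r) <= 1.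
Proof.
  split; [apply Rmax_l | apply Rmax_lub; [apply Rle_0_1 | apply Rmin_l]].
Qed.

Definition clamp (r : R) : II := exist _ (Rmax 0 (Rmin 1 r)) (clamp_prf r).

Section Pi1.
Context {X : Type} (OX : (X -> Prop) -> Prop) (x0 : X).

Definition is_loop (a : II -> X) : Prop := cont I_open OX a /\ a i0 = x0 /\ a i1 = x0.

Definition homotopic (a b : II -> X) : Prop :=
  exists H : II * II -> X, cont (prod_open I_open I_open) OX H /\
    (forall s, H (s, i0) = a s) /\ (forall s, H (s, i1) = b s) /\
    (forall t, H (i0, t) = x0 /\ H (i1, t) = x0).

Definition hcls (a : II -> X) : (II -> X) -> Prop := fun b => is_loop b /\ homotopic a b.

Definition Pi1 := { P : (II -> X) -> Prop | exists a, is_loop a /\ P = hcls a }.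

Definition const_loop : II -> X := fun _ => x0.

Lemma const_loop_is_loop : is_loop const_loop.
Proof.
  split; [| split; reflexivity].
  intros V _. exists (fun _ => V x0). split.
  - intros x H. exists 1. split; [apply Rlt_0_1 | intros; exact H].
  - intros t; unfold const_loop; tauto.
Qed.

(* class of a loop (of the constant loop if the argument is not a loop) *)
Definition pcls (a : II -> X) : Pi1 :=
  match excluded_middle_informative (is_loop a) with
  | left h => exist _ (hcls a) (ex_intro _ a (conj h eq_refl))
  | right _ => exist _ (hcls const_loop)
                 (ex_intro _ const_loop (conj const_loop_is_loop eq_refl))
  end.

Definition prep (p : Pi1) : II -> X :=
  proj1_sig (constructive_indefinite_description _ (proj2_sig p)).

Definition concat (a b : II -> X) : II -> X :=
  fun t => if Rle_dec (proj1_sig t) (1/2) then a (clamp (2 * proj1_sig t))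
           else b (clamp (2 * proj1_sig t - 1)).

Definition reverse (a : II -> X) : II -> X := fun t => a (clamp (1 - proj1_sig t)).

Definition pi1_mul (p q : Pi1) : Pi1 := pcls (concat (prep p) (prep q)).
Definition pi1_inv (p : Pi1) : Pi1 := pcls (reverse (prep p)).
Definition pi1_one : Pi1 := pcls const_loop.

Definition Omega := { a : II -> X | is_loop a }.

Definition CO_open : (Omega -> Prop) -> Prop :=
  gen_open (fun V => exists (K : II -> Prop) (U : X -> Prop),
     qt_compact I_open K /\ OX U /\
     V = (fun w : Omega => forall t, K t -> U (proj1_sig w t))).

(* pi_1^qtop: quotient topology from Omega via a |-> [a] *)
Definition qtop_open (V : Pi1 -> Prop) : Prop :=
  CO_open (fun w : Omega => V (pcls (proj1_sig w))).

End Pi1.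

(* Main.v *)
Require Import Defs.
From Stdlib Require Import Reals List Relations Classical ClassicalEpsilon.
From Stdlib Require Import Lra FunctionalExtensionality PropExtensionality ProofIrrelevance.

Lemma gen_open_top {X : Type} (B : (X -> Prop) -> Prop) : is_topology (gen_open B).
Proof.
  split; [|split].
  - intros O [H _] _. exact H.
  - intros U V HU HV O HO HB. destruct HO as [H1 [H2 H3]].
    apply H2; [apply HU|apply HV]; auto; split; auto.
  - intros F HF O HO HB. destruct HO as [H1 [H2 H3]].
    apply H3. intros U HU. apply HF; auto; split; auto.
Qed.

Lemma gen_open_base {X : Type} (B : (X -> Prop) -> Prop) V : B V -> gen_open B V.
Proof. intros HV O _ HB. auto. Qed.

Lemma pushforward_top {X Y : Type} (OX : (X -> Prop) -> Prop) (f : X -> Y) :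
  is_topology OX -> is_topology (fun V : Y -> Prop => OX (fun x => V (f x))).
Proof.
  intros [H1 [H2 H3]]; split; [|split].
  - exact H1.
  - intros U V HU HV. apply (H2 _ _ HU HV).
  - intros F HF. set (F' := fun W : X -> Prop => exists U, F U /\ W = (fun x => U (f x))).
    assert (OX (fun x => exists W, F' W /\ W x)).
    { apply H3. intros W [U [HU ->]]. auto. }
    replace (fun x => exists U, F U /\ U (f x)) with (fun x => exists W, F' W /\ W x); auto.
    apply functional_extensionality; intro x; apply propositional_extensionality; split.
    + intros [W [[U [HU ->]] HW]]. eauto.
    + intros [U [HU HUx]]. exists (fun x => U (f x)). split; auto. exists U; auto.
Qed.

Lemma cont_gen {X Y : Type} (OX : (X -> Prop) -> Prop) (B : (Y -> Prop) -> Prop) (f : X -> Y) :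
  is_topology OX -> (forall V, B V -> OX (fun x => V (f x))) -> cont OX (gen_open B) f.
Proof.
  intros HT HB V HV. apply (HV _ (pushforward_top OX f HT)). auto.
Qed.

Lemma top_ext {X : Type} (O : (X -> Prop) -> Prop) (U V : X -> Prop) :
  (forall x, U x <-> V x) -> O U -> O V.
Proof.
  intros H HU. replace V with U; auto.
  apply functional_extensionality; intro x; apply propositional_extensionality; auto.
Qed.

Lemma open_local {X : Type} (O : (X -> Prop) -> Prop) (W : X -> Prop) :
  is_topology O -> (forall x, W x -> exists U, O U /\ U x /\ forall y, U y -> W y) -> O W.
Proof.
  intros [H1 [H2 H3]] H.
  apply (top_ext O (fun x => exists U, (O U /\ forall y, U y -> W y) /\ U x)).
  - intro x; split.
    + intros [U [[_ HU] Ux]]; auto.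
    + intros Wx. destruct (H x Wx) as [U [HU [Ux HUW]]]. exists U; auto.
  - apply H3. intros U [HU _]; auto.
Qed.

Lemma top_inter_list {X A : Type} (O : (X -> Prop) -> Prop) (P : A -> X -> Prop) (l : list A) :
  is_topology O -> (forall a, O (P a)) -> O (fun x => forall a, In a l -> P a x).
Proof.
  intros HT HP. induction l as [|a l IH].
  - apply (top_ext O (fun _ => True)).
    + intros x; split; auto. intros _ a [].
    + apply HT.
  - apply (top_ext O (fun x => P a x /\ forall b, In b l -> P b x)).
    { intros x; split.
      - intros [Ha Hl] b [<-|Hb]; auto.
      - intros Hx; split; [apply Hx; left; auto| intros b Hb; apply Hx; right; auto]. }
    apply HT; auto.
Qed.

Section Grp.
Context {G : Type} (mul : G -> G -> G) (inv : G -> G) (e : G) (HG : is_group mul inv e).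

Lemma g_assoc x y z : mul x (mul y z) = mul (mul x y) z.
Proof. apply HG. Qed.
Lemma g_idl x : mul e x = x. Proof. apply HG. Qed.
Lemma g_idr x : mul x e = x. Proof. apply HG. Qed.
Lemma g_invl x : mul (inv x) x = e. Proof. apply HG. Qed.
Lemma g_invr x : mul x (inv x) = e. Proof. apply HG. Qed.

Lemma g_cancl x y : mul (inv x) (mul x y) = y.
Proof. rewrite g_assoc, g_invl, g_idl; auto. Qed.
Lemma g_cancl' x y : mul x (mul (inv x) y) = y.
Proof. rewrite g_assoc, g_invr, g_idl; auto. Qed.

Lemma g_inv_uniq x y : mul x y = e -> y = inv x.
Proof.
  intros H. rewrite <- (g_cancl x y), H, g_idr. auto.
Qed.
Lemma g_invinv x : inv (inv x) = x.
Proof. symmetry. apply g_inv_uniq. apply g_invl. Qed.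
Lemma g_invmul x y : inv (mul x y) = mul (inv y) (inv x).
Proof.
  symmetry; apply g_inv_uniq.
  rewrite <- g_assoc, (g_assoc y), g_invr, g_idl, g_invr; auto.
Qed.
Lemma g_inve : inv e = e.
Proof. symmetry; apply g_inv_uniq; apply g_idl. Qed.
End Grp.

Section WE.
Context {G : Type} (mul : G -> G -> G) (inv : G -> G) (e : G) (HG : is_group mul inv e).
Notation we := (word_eval mul inv e).

Lemma we_app u v : we (u ++ v) = mul (we u) (we v).
Proof.
  induction u as [|[x b] u IH]; simpl.
  - rewrite (g_idl _ _ _ HG); auto.
  - rewrite IH, (g_assoc _ _ _ HG); auto.
Qed.

Lemma we_red1 u v : red1 u v -> we u = we v.
Proof.
  intros []. rewrite !we_app; auto. simpl. f_equal.
  destruct b; simpl; [apply (g_cancl' _ _ _ HG) | apply (g_cancl _ _ _ HG)].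
Qed.

Lemma we_weq u v : weq u v -> we u = we v.
Proof.
  induction 1; auto. apply we_red1; auto. congruence.
Qed.
End WE.

Section FGs.
Context {S : Type}.

Lemma weq_refl (u : word S) : weq u u. Proof. apply rst_refl. Qed.
Lemma weq_sym (u v : word S) : weq u v -> weq v u. Proof. apply rst_sym. Qed.
Lemma weq_trans (u v w : word S) : weq u v -> weq v w -> weq u w. Proof. apply rst_trans. Qed.

Lemma weq_app_l (u v w : word S) : weq u v -> weq (w ++ u) (w ++ v).
Proof.
  induction 1.
  - apply rst_step. destruct H. rewrite !app_assoc. constructor.
  - apply weq_refl.
  - apply weq_sym; auto.
  - eapply weq_trans; eauto.
Qed.
Lemma weq_app_r (u v w : word S) : weq u v -> weq (u ++ w) (v ++ w).
Proof.
  induction 1.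
  - apply rst_step. destruct H. rewrite <- !app_assoc. simpl. constructor.
  - apply weq_refl.
  - apply weq_sym; auto.
  - eapply weq_trans; eauto.
Qed.
Lemma weq_app (u u' v v' : word S) : weq u u' -> weq v v' -> weq (u ++ v) (u' ++ v').
Proof. intros; eapply weq_trans; [apply weq_app_r|apply weq_app_l]; eauto. Qed.

Lemma weq_ext (u v : word S) : weq u v -> weq u = weq v.
Proof.
  intros H. apply functional_extensionality; intro w; apply propositional_extensionality.
  split; intros; eapply weq_trans; eauto using weq_sym.
Qed.

Lemma fg_cls_eq (u v : word S) : weq u v -> fg_cls u = fg_cls v.
Proof.
  intros H. unfold fg_cls. apply eq_sig_hprop.
  - intros; apply proof_irrelevance.
  - simpl; apply weq_ext; auto.
Qed.

Lemma fg_rep_spec (p : FG S) : proj1_sig p = weq (fg_rep p).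
Proof.
  unfold fg_rep. destruct (constructive_indefinite_description _ _); simpl; auto.
Qed.

Lemma fg_cls_rep (p : FG S) : fg_cls (fg_rep p) = p.
Proof.
  apply eq_sig_hprop. { intros; apply proof_irrelevance. }
  simpl. symmetry. apply fg_rep_spec.
Qed.

Lemma fg_rep_cls (u : word S) : weq (fg_rep (fg_cls u)) u.
Proof.
  pose proof (fg_rep_spec (fg_cls u)) as H. simpl in H.
  apply weq_sym. rewrite H. apply weq_refl.
Qed.

Lemma winv_cons x b (w : word S) : winv ((x, b) :: w) = winv w ++ (x, negb b) :: nil.
Proof. reflexivity. Qed.

Lemma winv_l (w : word S) : weq (winv w ++ w) nil.
Proof.
  induction w as [|[x b] w IH]. apply weq_refl.
  rewrite winv_cons, <- app_assoc. simpl.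
  eapply weq_trans; [|exact IH].
  apply rst_step. pose proof (red1_intro (winv w) w x (negb b)) as H.
  rewrite Bool.negb_involutive in H. exact H.
Qed.

Lemma fg_group : is_group (@fg_mul S) (@fg_inv S) (@fg_one S).
Proof.
  split; [|split].
  - intros x y z. unfold fg_mul. apply fg_cls_eq.
    eapply weq_trans. { apply weq_app; [apply weq_refl| apply fg_rep_cls]. }
    eapply weq_trans. 2:{ apply weq_sym, weq_app; [apply fg_rep_cls|apply weq_refl]. }
    rewrite app_assoc. apply weq_refl.
  - intros x; split; unfold fg_mul, fg_one; rewrite <- (fg_cls_rep x) at 2; apply fg_cls_eq.
    + eapply weq_trans. { apply weq_app; [apply fg_rep_cls| apply weq_refl]. } apply weq_refl.
    + eapply weq_trans. { apply weq_app; [apply weq_refl|apply fg_rep_cls]. }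
      rewrite app_nil_r. apply weq_refl.
  - intros x; split; unfold fg_mul, fg_inv, fg_one; apply fg_cls_eq.
    + eapply weq_trans. { apply weq_app; [apply fg_rep_cls| apply weq_refl]. } apply winv_l.
    + eapply weq_trans. { apply weq_app; [apply weq_refl|apply fg_rep_cls]. }
      set (w := fg_rep x).
      assert (winv (winv w) = w).
      { unfold winv. rewrite map_rev, rev_involutive, map_map.
        simpl. transitivity (map (fun x => x) w); [|apply map_id].
        apply map_ext. intros [a c]; simpl; rewrite Bool.negb_involutive; auto. }
      rewrite <- H at 1. apply winv_l.
Qed.
End FGs.

Section Part1.
Context {G : Type} (mul : G -> G -> G) (inv : G -> G) (e : G) (OG : (G -> Prop) -> Prop)
  (HG : is_group mul inv e) (HT : is_topology OG)
  (HL : forall a, cont OG OG (fun x => mul a x)) (HR : forall a, cont OG OG (fun x => mul x a)).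

Notation m := (m_G mul inv e).
Let assoc := g_assoc _ _ _ HG.
Let idl := g_idl _ _ _ HG.
Let idr := g_idr _ _ _ HG.
Let invl := g_invl _ _ _ HG.
Let invr := g_invr _ _ _ HG.
Let invmul := g_invmul _ _ _ HG.
Let invinv := g_invinv _ _ _ HG.

Lemma m_mul p q : m (fg_mul p q) = mul (m p) (m q).
Proof.
  unfold m_G, fg_mul. rewrite (we_weq _ _ _ HG _ _ (fg_rep_cls _)). apply we_app; auto.
Qed.

Lemma m_one : m fg_one = e.
Proof. unfold m_G, fg_one. rewrite (we_weq _ _ _ HG _ _ (fg_rep_cls _)). reflexivity. Qed.

Lemma m_inv p : m (fg_inv p) = inv (m p).
Proof.
  assert (mul (m (fg_inv p)) (m p) = e).
  { rewrite <- m_mul. destruct (proj2 (proj2 (fg_group (S:=G))) p) as [-> _]. apply m_one. }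
  transitivity (mul (m (fg_inv p)) (mul (m p) (inv (m p)))).
  - rewrite invr, idr; auto.
  - rewrite assoc, H, idl. auto.
Qed.

Lemma m_sigma x : m (fg_sigma x) = x.
Proof.
  unfold m_G, fg_sigma. rewrite (we_weq _ _ _ HG _ _ (fg_rep_cls _)). simpl. apply idr.
Qed.

Lemma sigma_cont : cont OG (FM_open OG) (@fg_sigma G).
Proof.
  apply cont_gen; auto. intros V [T [_ [Hc HV]]]. apply Hc; auto.
Qed.

Lemma tau_to_open U : tau_open mul inv e OG U -> OG U.
Proof.
  intros HU. pose proof (sigma_cont _ HU) as H. simpl in H.
  eapply top_ext; [|exact H]. intros x. unfold tau_open in *. simpl. rewrite m_sigma; tauto.
Qed.

Section Sub.
Context (H : G -> Prop) (HH : is_subgroup mul inv e H) (HO : OG H).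

Definition Rl a b g := H (mul (inv (mul b g)) (mul a g)).

Let He : H e := proj1 HH.
Let Hmul : forall x y, H x -> H y -> H (mul x y) := proj1 (proj2 HH).
Let Hinv : forall x, H x -> H (inv x) := proj2 (proj2 HH).

Lemma Rl_refl a g : Rl a a g.
Proof. unfold Rl. rewrite invl. auto. Qed.

Lemma Rl_trans a b c g : Rl a b g -> Rl b c g -> Rl a c g.
Proof.
  unfold Rl; intros H1 H2.
  replace (mul (inv (mul c g)) (mul a g)) with
    (mul (mul (inv (mul c g)) (mul b g)) (mul (inv (mul b g)) (mul a g))); auto.
  rewrite <- assoc, (assoc (mul b g)), invr, idl. auto.
Qed.

Definition Tt (U : FG G -> Prop) : Prop :=
  forall p, U p -> exists l, forall q, (forall g, In g l -> Rl (m q) (m p) g) -> U q.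

Lemma Tt_ball p l : Tt (fun q => forall g, In g l -> Rl (m q) (m p) g).
Proof.
  intros p' Hp'. exists l. intros q Hq g Hg. eapply Rl_trans; eauto.
Qed.

Lemma Tt_top : is_topology Tt.
Proof.
  split; [|split].
  - intros p _. exists nil; auto.
  - intros U V HU HV p [Up Vp].
    destruct (HU p Up) as [l1 H1]; destruct (HV p Vp) as [l2 H2].
    exists (l1 ++ l2). intros q Hq; split; [apply H1|apply H2]; intros g Hg; apply Hq;
      apply in_or_app; auto.
  - intros F HF p [U [FU Up]]. destruct (HF U FU p Up) as [l Hl].
    exists l. intros q Hq. exists U; split; auto.
Qed.

Lemma Tt_group : is_top_group (@fg_mul G) (@fg_inv G) (@fg_one G) Tt.
Proof.
  split; [apply fg_group|split; [apply Tt_top|split]].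
  - intros V HV p Vp. destruct (HV _ Vp) as [l Hl].
    exists (map (fun g => mul (inv (m p)) g) l). intros q Hq. apply Hl.
    intros g Hg. specialize (Hq (mul (inv (m p)) g) (in_map _ _ _ Hg)).
    unfold Rl in *. rewrite !m_inv.
    apply Hinv in Hq.
    replace (mul (inv (mul (inv (m p)) g)) (mul (inv (m q)) g)) with
      (inv (mul (inv (mul (m p) (mul (inv (m p)) g))) (mul (m q) (mul (inv (m p)) g)))); auto.
    rewrite !invmul, !invinv, (g_cancl' _ _ _ HG).
    rewrite <- !assoc. auto.
  - intros V HV a b Vab. simpl in Vab. destruct (HV _ Vab) as [l Hl].
    exists (fun p => forall g, In g (map (fun g => mul (m b) g) l) -> Rl (m p) (m a) g).
    exists (fun q => forall g, In g l -> Rl (m q) (m b) g).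
    split; [apply Tt_ball|split;[apply Tt_ball|split;[|split]]].
    + intros; apply Rl_refl.
    + intros; apply Rl_refl.
    + intros p q Hp Hq. simpl. apply Hl. intros g Hg.
      specialize (Hq g Hg). specialize (Hp _ (in_map _ _ _ Hg)).
      unfold Rl in *. rewrite !m_mul in *.
      replace (mul (inv (mul (mul (m a) (m b)) g)) (mul (mul (m p) (m q)) g)) with
        (mul (mul (inv (mul (m a) (mul (m b) g))) (mul (m p) (mul (m b) g)))
             (mul (inv (mul (m b) g)) (mul (m q) g))); auto.
      rewrite !invmul. rewrite <- !assoc. idtac.
      rewrite (g_cancl' _ _ _ HG g), (g_cancl' _ _ _ HG (m b)).
      auto.
Qed.

Lemma Tt_sigma : cont OG Tt (@fg_sigma G).
Proof.
  intros V HV. apply open_local; auto. intros x Vx.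
  destruct (HV _ Vx) as [l Hl].
  exists (fun y => forall g, In g l -> Rl y x g). split; [|split].
  - apply top_inter_list; auto. intros g. unfold Rl.
    pose proof (HL (inv (mul x g)) _ HO) as H1. apply (HR g _ H1).
  - intros; apply Rl_refl.
  - intros y Hy. apply Hl. rewrite !m_sigma. auto.
Qed.

Lemma open_to_tau : tau_open mul inv e OG H.
Proof.
  intros O HOt HB. apply HB. exists Tt. split; [apply Tt_group|split; [apply Tt_sigma|]].
  intros p Hp. exists (e :: nil). intros q Hq. specialize (Hq e (or_introl eq_refl)).
  unfold Rl in Hq. rewrite !idr in Hq.
  replace (m q) with (mul (m p) (mul (inv (m p)) (m q))); auto.
  apply (g_cancl' _ _ _ HG).
Qed.
End Sub.

Lemma part1_main H : is_subgroup mul inv e H -> (OG H <-> tau_open mul inv e OG H).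
Proof.
  intros HH; split; [apply open_to_tau; auto| apply tau_to_open].
Qed.
End Part1.

Open Scope R_scope.
Definition val (t : II) : R := proj1_sig t.
Lemma val_bnd t : 0 <= val t <= 1. Proof. exact (proj2_sig t). Qed.
Lemma II_eq s t : val s = val t -> s = t.
Proof. intros H. apply eq_sig_hprop; auto. intros; apply proof_irrelevance. Qed.
Lemma clamp_val r : val (clamp r) = Rmax 0 (Rmin 1 r). Proof. reflexivity. Qed.
Lemma val_i0 : val i0 = 0. Proof. reflexivity. Qed.
Lemma val_i1 : val i1 = 1. Proof. reflexivity. Qed.

Lemma clamp_lip r r' : Rabs (val (clamp r') - val (clamp r)) <= Rabs (r' - r).
Proof.
  rewrite !clamp_val. unfold Rmax, Rmin.
  repeat destruct Rle_dec; unfold Rabs; repeat destruct Rcase_abs; lra.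
Qed.

Lemma clamp_id t : clamp (val t) = t.
Proof. apply II_eq. rewrite clamp_val. pose proof (val_bnd t).
  unfold Rmax, Rmin; repeat destruct Rle_dec; lra. Qed.

Definition ball (t : II) (d : R) : II -> Prop := fun t' => Rabs (val t' - val t) < d.

Lemma I_open_iff V : I_open V <->
  (forall t, V t -> exists d, d > 0 /\ forall t', Rabs (val t' - val t) < d -> V t').
Proof.
  split.
  - intros [U [HU HV]] t Vt. apply HV in Vt. destruct (HU _ Vt) as [d [Hd Hd']].
    exists d; split; auto. intros t' Ht'. apply HV. apply Hd'. exact Ht'.
  - intros H.
    exists (fun r => exists t d, d > 0 /\ Rabs (r - val t) < d /\
                     forall t', Rabs (val t' - val t) < d -> V t').
    split.
    + intros r [t [d [Hd [Hr Ht]]]]. exists (d - Rabs (r - val t)). split; [lra|].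
      intros y Hy. exists t, d. split; auto. split; auto.
      pose proof (Rabs_triang (y - r) (r - val t)).
      replace (y - r + (r - val t)) with (y - val t) in H0 by ring. lra.
    + intros t; split.
      * intros Vt. destruct (H t Vt) as [d [Hd Hd']]. exists t, d. split; [auto|split; auto].
        unfold Rminus; rewrite Rplus_opp_r, Rabs_R0. auto.
      * intros [t' [d [Hd [Hr Ht]]]]. apply Ht. exact Hr.
Qed.

Lemma ball_open t d : I_open (ball t d).
Proof.
  apply I_open_iff. intros t' Ht'. unfold ball in *. exists (d - Rabs (val t' - val t)).
  split; [lra|]. intros t'' H.
  pose proof (Rabs_triang (val t'' - val t') (val t' - val t)).
  replace (val t'' - val t' + (val t' - val t)) with (val t'' - val t) in H0 by ring. lra.
Qed.

Definition PI := prod_open I_open I_open.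

Lemma P_open_iff W : PI W <->
  (forall s t, W (s, t) -> exists d, d > 0 /\ forall s' t',
     Rabs (val s' - val s) < d -> Rabs (val t' - val t) < d -> W (s', t')).
Proof.
  split.
  - intros H s t Wst. destruct (H s t Wst) as [U [V [HU [HV [Us [Vt HUV]]]]]].
    destruct (proj1 (I_open_iff U) HU s Us) as [d1 [Hd1 H1]].
    destruct (proj1 (I_open_iff V) HV t Vt) as [d2 [Hd2 H2]].
    exists (Rmin d1 d2). split. { unfold Rmin; destruct Rle_dec; lra. }
    intros s' t' Hs Ht. apply HUV; [apply H1|apply H2].
    + eapply Rlt_le_trans; [exact Hs|apply Rmin_l].
    + eapply Rlt_le_trans; [exact Ht|apply Rmin_r].
  - intros H s t Wst. destruct (H s t Wst) as [d [Hd Hd']].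
    exists (ball s d), (ball t d). split; [apply ball_open|split;[apply ball_open|]].
    unfold ball. replace (val s - val s) with 0 by ring. replace (val t - val t) with 0 by ring.
    rewrite Rabs_R0. repeat split; auto.
Qed.

Definition mc1 (f : II -> II) : Prop :=
  forall t eps, eps > 0 -> exists d, d > 0 /\ forall t',
    Rabs (val t' - val t) < d -> Rabs (val (f t') - val (f t)) < eps.

Definition mc2 (f : II * II -> II) : Prop :=
  forall s t eps, eps > 0 -> exists d, d > 0 /\ forall s' t',
    Rabs (val s' - val s) < d -> Rabs (val t' - val t) < d ->
    Rabs (val (f (s', t')) - val (f (s, t))) < eps.

Definition rc2 (f : II * II -> R) : Prop :=
  forall s t eps, eps > 0 -> exists d, d > 0 /\ forall s' t',
    Rabs (val s' - val s) < d -> Rabs (val t' - val t) < d ->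
    Rabs (f (s', t') - f (s, t)) < eps.

Definition lip1 (u : R -> R) (L : R) : Prop :=
  0 <= L /\ forall s s', 0 <= s <= 1 -> 0 <= s' <= 1 -> Rabs (u s' - u s) <= L * Rabs (s' - s).

Definition lip2 (u : R -> R -> R) (L : R) : Prop :=
  0 <= L /\ forall s t s' t', 0 <= s <= 1 -> 0 <= s' <= 1 -> 0 <= t <= 1 -> 0 <= t' <= 1 ->
    Rabs (u s' t' - u s t) <= L * Rabs (s' - s) + L * Rabs (t' - t).

Lemma mc1_lip u L : lip1 u L -> mc1 (fun t => clamp (u (val t))).
Proof.
  intros [HL Hu] t eps He. exists (eps / (L + 1)). split.
  { apply Rdiv_lt_0_compat; lra. }
  intros t' Ht'. eapply Rle_lt_trans; [apply clamp_lip|].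
  eapply Rle_lt_trans; [apply Hu; apply val_bnd|].
  apply Rle_lt_trans with ((L+1) * Rabs (val t' - val t)).
  { pose proof (Rabs_pos (val t' - val t)). nra. }
  apply Rmult_lt_reg_r with (/ (L+1)). { apply Rinv_0_lt_compat; lra. }
  replace ((L + 1) * Rabs (val t' - val t) * / (L + 1)) with (Rabs (val t' - val t)).
  2:{ field. lra. }
  exact Ht'.
Qed.

Lemma mc2_lip u L : lip2 u L ->
  mc2 (fun p => clamp (u (val (fst p)) (val (snd p)))).
Proof.
  intros [HL Hu] s t eps He. exists (eps / (2 * L + 1)). split.
  { apply Rdiv_lt_0_compat; lra. }
  intros s' t' Hs Ht. simpl. eapply Rle_lt_trans; [apply clamp_lip|].
  eapply Rle_lt_trans; [apply Hu; apply val_bnd|].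
  assert (Hd : eps / (2 * L + 1) * (2 * L + 1) = eps) by (field; lra).
  pose proof (Rabs_pos (val s' - val s)). pose proof (Rabs_pos (val t' - val t)).
  assert (eps / (2 * L + 1) > 0) by (apply Rdiv_lt_0_compat; lra).
  nra.
Qed.

Lemma mc2_fst : mc2 fst.
Proof. intros s t eps He. exists eps; split; auto. Qed.
Lemma mc2_snd : mc2 snd.
Proof. intros s t eps He. exists eps; split; auto. Qed.
Lemma rc2_fst : rc2 (fun p => val (fst p)).
Proof. intros s t eps He. exists eps; split; auto. Qed.
Lemma rc2_snd : rc2 (fun p => val (snd p)).
Proof. intros s t eps He. exists eps; split; auto. Qed.

Lemma mc1_rc (f : II -> R) : (forall t eps, eps > 0 -> exists d, d > 0 /\ forall t',
    Rabs (val t' - val t) < d -> Rabs (f t' - f t) < eps) -> True.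
Proof. auto. Qed.

Lemma lip_interp u v Lu Lv M :
  lip1 u Lu -> lip1 v Lv -> 0 <= M -> (forall s, 0 <= s <= 1 -> Rabs (u s) <= M /\ Rabs (v s) <= M) ->
  lip2 (fun s t => (1 - t) * u s + t * v s) (2 * Lu + Lv + 2 * M).
Proof.
  intros [HLu Hu] [HLv Hv] HM HB. split; [lra|].
  intros s t s' t' Hs Hs' Ht Ht'.
  replace ((1 - t') * u s' + t' * v s' - ((1 - t) * u s + t * v s)) with
    ((u s' - u s) + t' * ((v s' - v s) - (u s' - u s)) + (t' - t) * (v s - u s)) by ring.
  pose proof (Hu s s' Hs Hs'). pose proof (Hv s s' Hs Hs').
  destruct (HB s Hs) as [B1 B2].
  pose proof (Rabs_pos (s' - s)). pose proof (Rabs_pos (t' - t)).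
  eapply Rle_trans; [apply Rabs_triang|]. eapply Rle_trans; [apply Rplus_le_compat_r, Rabs_triang|].
  rewrite !Rabs_mult.
  assert (Rabs t' <= 1) by (rewrite Rabs_pos_eq; lra).
  assert (Rabs (v s' - v s - (u s' - u s)) <= Rabs (v s' - v s) + Rabs (u s' - u s)).
  { unfold Rminus at 1. eapply Rle_trans; [apply Rabs_triang|]. rewrite Rabs_Ropp. lra. }
  assert (Rabs (v s - u s) <= 2 * M).
  { unfold Rminus. eapply Rle_trans; [apply Rabs_triang|]. rewrite Rabs_Ropp. lra. }
  pose proof (Rabs_pos t'). pose proof (Rabs_pos (v s' - v s - (u s' - u s))).
  pose proof (Rabs_pos (v s - u s)).
  nra.
Qed.

Ltac lipt := unfold Rmin, Rmax; repeat destruct Rle_dec; unfold Rabs; repeat destruct Rcase_abs; nra.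

Local Notation concat := Defs.concat.
Section Hom.
Context {X : Type} (OX : (X -> Prop) -> Prop) (x0 : X) (HX : is_topology OX).

Lemma comp1 (a : II -> X) f : cont I_open OX a -> mc1 f -> cont I_open OX (fun t => a (f t)).
Proof.
  intros Ha Hf V HV. pose proof (proj1 (I_open_iff _) (Ha V HV)) as H.
  apply I_open_iff. intros t Vt. destruct (H _ Vt) as [d1 [Hd1 H1]].
  destruct (Hf t d1 Hd1) as [d [Hd H2]]. exists d; split; auto.
Qed.

Lemma comp21 (a : II -> X) f : cont I_open OX a -> mc2 f -> cont PI OX (fun p => a (f p)).
Proof.
  intros Ha Hf V HV. pose proof (proj1 (I_open_iff _) (Ha V HV)) as H.
  apply P_open_iff. intros s t Vt. destruct (H _ Vt) as [d1 [Hd1 H1]].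
  destruct (Hf s t d1 Hd1) as [d [Hd H2]]. exists d; split; auto.
Qed.

Lemma comp2 (H : II * II -> X) f1 f2 : cont PI OX H -> mc2 f1 -> mc2 f2 ->
  cont PI OX (fun p => H (f1 p, f2 p)).
Proof.
  intros HH Hf1 Hf2 V HV. pose proof (proj1 (P_open_iff _) (HH V HV)) as H0.
  apply P_open_iff. intros s t Vt. destruct (H0 _ _ Vt) as [d1 [Hd1 H1]].
  destruct (Hf1 s t d1 Hd1) as [e1 [He1 E1]]. destruct (Hf2 s t d1 Hd1) as [e2 [He2 E2]].
  exists (Rmin e1 e2). split. { unfold Rmin; destruct Rle_dec; lra. }
  intros s' t' Hs Ht. pose proof (Rmin_l e1 e2). pose proof (Rmin_r e1 e2).
  apply H1; [apply E1|apply E2]; lra.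
Qed.

Lemma paste2 (c : II * II -> R) r (F1 F2 : II * II -> X) :
  rc2 c -> cont PI OX F1 -> cont PI OX F2 -> (forall p, c p = r -> F1 p = F2 p) ->
  cont PI OX (fun p => if Rle_dec (c p) r then F1 p else F2 p).
Proof.
  intros Hc H1 H2 Heq V HV.
  pose proof (proj1 (P_open_iff _) (H1 V HV)) as G1.
  pose proof (proj1 (P_open_iff _) (H2 V HV)) as G2.
  apply P_open_iff. intros s t Vt.
  destruct (Rtotal_order (c (s, t)) r) as [Hlt|[Heq'|Hgt]].
  - destruct (Rle_dec (c (s,t)) r) as [_|n]; [|lra].
    destruct (G1 _ _ Vt) as [d1 [Hd1 E1]].
    destruct (Hc s t (r - c (s,t))) as [d2 [Hd2 E2]]; [lra|].
    exists (Rmin d1 d2). split. { unfold Rmin; destruct Rle_dec; lra. }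
    intros s' t' Hs Ht. pose proof (Rmin_l d1 d2). pose proof (Rmin_r d1 d2).
    assert (c (s', t') < r).
    { specialize (E2 s' t' ltac:(lra) ltac:(lra)). unfold Rabs in E2; destruct Rcase_abs; lra. }
    destruct (Rle_dec (c (s',t')) r); [|lra]. apply E1; lra.
  - pose proof (Heq _ Heq') as Hst.
    destruct (Rle_dec (c (s,t)) r) as [_|n]; [|lra].
    destruct (G1 _ _ Vt) as [d1 [Hd1 E1]].
    rewrite Hst in Vt. destruct (G2 _ _ Vt) as [d2 [Hd2 E2]].
    exists (Rmin d1 d2). split. { unfold Rmin; destruct Rle_dec; lra. }
    intros s' t' Hs Ht. pose proof (Rmin_l d1 d2). pose proof (Rmin_r d1 d2).
    destruct (Rle_dec (c (s',t')) r); [apply E1|apply E2]; lra.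
  - destruct (Rle_dec (c (s,t)) r) as [n|_]; [lra|].
    destruct (G2 _ _ Vt) as [d1 [Hd1 E1]].
    destruct (Hc s t (c (s,t) - r)) as [d2 [Hd2 E2]]; [lra|].
    exists (Rmin d1 d2). split. { unfold Rmin; destruct Rle_dec; lra. }
    intros s' t' Hs Ht. pose proof (Rmin_l d1 d2). pose proof (Rmin_r d1 d2).
    assert (c (s', t') > r).
    { specialize (E2 s' t' ltac:(lra) ltac:(lra)). unfold Rabs in E2; destruct Rcase_abs; lra. }
    destruct (Rle_dec (c (s',t')) r); [lra|]. apply E1; lra.
Qed.

Lemma paste1 r (F1 F2 : II -> X) :
  cont I_open OX F1 -> cont I_open OX F2 -> (forall t, val t = r -> F1 t = F2 t) ->
  cont I_open OX (fun t => if Rle_dec (val t) r then F1 t else F2 t).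
Proof.
  intros H1 H2 Heq V HV.
  pose proof (proj1 (I_open_iff _) (H1 V HV)) as G1.
  pose proof (proj1 (I_open_iff _) (H2 V HV)) as G2.
  apply I_open_iff. intros t Vt.
  destruct (Rtotal_order (val t) r) as [Hlt|[Heq'|Hgt]].
  - destruct (Rle_dec (val t) r) as [_|n]; [|lra].
    destruct (G1 _ Vt) as [d1 [Hd1 E1]].
    exists (Rmin d1 (r - val t)). split. { unfold Rmin; destruct Rle_dec; lra. }
    intros t' Ht. pose proof (Rmin_l d1 (r - val t)). pose proof (Rmin_r d1 (r - val t)).
    assert (val t' < r). { unfold Rabs in Ht; destruct Rcase_abs; lra. }
    destruct (Rle_dec (val t') r); [|lra]. apply E1; lra.
  - pose proof (Heq _ Heq') as Hst.
    destruct (Rle_dec (val t) r) as [_|n]; [|lra].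
    destruct (G1 _ Vt) as [d1 [Hd1 E1]].
    rewrite Hst in Vt. destruct (G2 _ Vt) as [d2 [Hd2 E2]].
    exists (Rmin d1 d2). split. { unfold Rmin; destruct Rle_dec; lra. }
    intros t' Ht. pose proof (Rmin_l d1 d2). pose proof (Rmin_r d1 d2).
    destruct (Rle_dec (val t') r); [apply E1|apply E2]; lra.
  - destruct (Rle_dec (val t) r) as [n|_]; [lra|].
    destruct (G2 _ Vt) as [d1 [Hd1 E1]].
    exists (Rmin d1 (val t - r)). split. { unfold Rmin; destruct Rle_dec; lra. }
    intros t' Ht. pose proof (Rmin_l d1 (val t - r)). pose proof (Rmin_r d1 (val t - r)).
    assert (val t' > r). { unfold Rabs in Ht; destruct Rcase_abs; lra. }
    destruct (Rle_dec (val t') r); [lra|]. apply E1; lra.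
Qed.

Notation loop := (is_loop OX x0).
Notation hom := (homotopic OX x0).

Lemma loop_end a x : loop a -> val x = 0 \/ val x = 1 -> a x = x0.
Proof.
  intros [_ [H0 H1]] [Hx|Hx].
  - rewrite (II_eq x i0); auto.
  - rewrite (II_eq x i1); auto.
Qed.

Lemma lip1_2x : lip1 (fun s => 2 * s) 2.
Proof. split; [lra|]. intros; lipt. Qed.
Lemma lip1_2x1 : lip1 (fun s => 2 * s - 1) 2.
Proof. split; [lra|]. intros; lipt. Qed.
Lemma lip1_1mx : lip1 (fun s => 1 - s) 1.
Proof. split; [lra|]. intros; lipt. Qed.

Lemma concat_loop a b : loop a -> loop b -> loop (concat a b).
Proof.
  intros Ha Hb. split; [|split].
  - apply (paste1 (1/2) (fun t => a (clamp (2 * val t))) (fun t => b (clamp (2 * val t - 1)))).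
    + apply comp1; [apply (proj1 Ha)| apply (mc1_lip _ _ lip1_2x)].
    + apply comp1; [apply (proj1 Hb)| apply (mc1_lip _ _ lip1_2x1)].
    + intros t Ht. rewrite (loop_end a), (loop_end b); auto;
        rewrite clamp_val, Ht; unfold Rmax, Rmin; repeat destruct Rle_dec; lra.
  - unfold concat. simpl. destruct Rle_dec; [|lra].
    apply loop_end; auto. rewrite clamp_val; unfold Rmax, Rmin; repeat destruct Rle_dec; lra.
  - unfold concat. simpl. destruct Rle_dec; [lra|].
    apply loop_end; auto. rewrite clamp_val; unfold Rmax, Rmin; repeat destruct Rle_dec; lra.
Qed.

Lemma reverse_loop a : loop a -> loop (reverse a).
Proof.
  intros Ha. split; [|split].
  - unfold reverse. apply (comp1 a); [apply (proj1 Ha)| apply (mc1_lip _ _ lip1_1mx)].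
  - unfold reverse. apply loop_end; auto. rewrite clamp_val; simpl;
      unfold Rmax, Rmin; repeat destruct Rle_dec; lra.
  - unfold reverse. apply loop_end; auto. rewrite clamp_val; simpl;
      unfold Rmax, Rmin; repeat destruct Rle_dec; lra.
Qed.

Lemma const_loop_ok : loop (const_loop x0).
Proof. apply const_loop_is_loop. Qed.

Lemma hom_refl a : loop a -> hom a a.
Proof.
  intros Ha. exists (fun p => a (fst p)). split; [|split; [|split]]; auto.
  - apply comp21; [apply (proj1 Ha)|apply mc2_fst].
  - intros t; split; apply Ha.
Qed.

Lemma lip_1my : lip2 (fun s t => 1 - t) 1.
Proof. split; [lra|]. intros; lipt. Qed.
Lemma lip_2y : lip2 (fun s t => 2 * t) 2.
Proof. split; [lra|]. intros; lipt. Qed.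
Lemma lip_2y1 : lip2 (fun s t => 2 * t - 1) 2.
Proof. split; [lra|]. intros; lipt. Qed.
Lemma lip_2x : lip2 (fun s t => 2 * s) 2.
Proof. split; [lra|]. intros; lipt. Qed.
Lemma lip_2x1 : lip2 (fun s t => 2 * s - 1) 2.
Proof. split; [lra|]. intros; lipt. Qed.

Lemma hom_sym a b : hom a b -> hom b a.
Proof.
  intros [H [Hc [H0 [H1 He]]]].
  exists (fun p => H (fst p, clamp (1 - val (snd p)))). split; [|split; [|split]].
  - apply comp2; auto; [apply mc2_fst| apply (mc2_lip _ _ lip_1my)].
  - intros s. rewrite <- H1. f_equal. f_equal. apply II_eq. rewrite clamp_val. simpl.
    unfold Rmax, Rmin; repeat destruct Rle_dec; lra.
  - intros s. rewrite <- H0. f_equal. f_equal. apply II_eq. rewrite clamp_val. simpl.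
    unfold Rmax, Rmin; repeat destruct Rle_dec; lra.
  - intros t; apply He.
Qed.

Lemma hom_trans a b c : hom a b -> hom b c -> hom a c.
Proof.
  intros [H [Hc [H0 [H1 He]]]] [K [Kc [K0 [K1 Ke]]]].
  exists (fun p => if Rle_dec (val (snd p)) (1/2) then H (fst p, clamp (2 * val (snd p)))
                  else K (fst p, clamp (2 * val (snd p) - 1))).
  split; [|split; [|split]].
  - apply paste2; [apply rc2_snd| | |].
    + apply comp2; auto; [apply mc2_fst| apply (mc2_lip _ _ lip_2y)].
    + apply comp2; auto; [apply mc2_fst| apply (mc2_lip _ _ lip_2y1)].
    + intros [s t] Ht. simpl in *.
      replace (clamp (2 * val t)) with i1. 2:{ apply II_eq; rewrite clamp_val; simpl; rewrite Ht;
        unfold Rmax, Rmin; repeat destruct Rle_dec; lra. }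
      replace (clamp (2 * val t - 1)) with i0. 2:{ apply II_eq; rewrite clamp_val; simpl; rewrite Ht;
        unfold Rmax, Rmin; repeat destruct Rle_dec; lra. }
      rewrite H1, K0. auto.
  - intros s. simpl. destruct Rle_dec; [|lra]. rewrite <- H0. f_equal; f_equal; apply II_eq;
      rewrite clamp_val; simpl; unfold Rmax, Rmin; repeat destruct Rle_dec; lra.
  - intros s. simpl. destruct Rle_dec; [lra|]. rewrite <- K1. f_equal; f_equal; apply II_eq;
      rewrite clamp_val; simpl; unfold Rmax, Rmin; repeat destruct Rle_dec; lra.
  - intros t. simpl. destruct Rle_dec; auto.
Qed.

Lemma hom_concat a a' b b' : hom a a' -> hom b b' -> hom (concat a b) (concat a' b').
Proof.
  intros [H [Hc [H0 [H1 He]]]] [K [Kc [K0 [K1 Ke]]]].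
  exists (fun p => if Rle_dec (val (fst p)) (1/2) then H (clamp (2 * val (fst p)), snd p)
                  else K (clamp (2 * val (fst p) - 1), snd p)).
  split; [|split; [|split]].
  - apply paste2; [apply rc2_fst| | |].
    + apply comp2; auto; [apply (mc2_lip _ _ lip_2x)|apply mc2_snd].
    + apply comp2; auto; [apply (mc2_lip _ _ lip_2x1)|apply mc2_snd].
    + intros [s t] Hs. simpl in *.
      replace (clamp (2 * val s)) with i1. 2:{ apply II_eq; rewrite clamp_val; simpl; rewrite Hs;
        unfold Rmax, Rmin; repeat destruct Rle_dec; lra. }
      replace (clamp (2 * val s - 1)) with i0. 2:{ apply II_eq; rewrite clamp_val; simpl; rewrite Hs;
        unfold Rmax, Rmin; repeat destruct Rle_dec; lra. }
      rewrite (proj2 (He t)), (proj1 (Ke t)). auto.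
  - intros s. simpl. unfold concat. destruct Rle_dec; auto.
  - intros s. simpl. unfold concat. destruct Rle_dec; auto.
  - intros t. simpl. split.
    + destruct Rle_dec; [|lra].
      replace (clamp (2 * 0)) with i0. { apply He. }
      apply II_eq; rewrite clamp_val; simpl; unfold Rmax, Rmin; repeat destruct Rle_dec; lra.
    + destruct Rle_dec; [lra|].
      replace (clamp (2 * 1 - 1)) with i1. { apply Ke. }
      apply II_eq; rewrite clamp_val; simpl; unfold Rmax, Rmin; repeat destruct Rle_dec; lra.
Qed.

Lemma hom_reparam d Phi L : loop d -> lip2 Phi L ->
  (forall t, 0 <= t <= 1 -> d (clamp (Phi 0 t)) = x0 /\ d (clamp (Phi 1 t)) = x0) ->
  hom (fun s => d (clamp (Phi (val s) 0))) (fun s => d (clamp (Phi (val s) 1))).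
Proof.
  intros Hd HL Hend. exists (fun p => d (clamp (Phi (val (fst p)) (val (snd p))))).
  split; [|split; [|split]]; auto.
  - apply comp21; [apply (proj1 Hd)|apply (mc2_lip _ _ HL)].
  - intros t. apply Hend, val_bnd.
Qed.

End Hom.

Lemma clamp_val2 r : proj1_sig (clamp r) = Rmax 0 (Rmin 1 r). Proof. reflexivity. Qed.

Lemma clamp_spec r : (r <= 0 /\ proj1_sig (clamp r) = 0) \/
  (0 <= r <= 1 /\ proj1_sig (clamp r) = r) \/ (1 <= r /\ proj1_sig (clamp r) = 1).
Proof. rewrite clamp_val2. unfold Rmax, Rmin; repeat destruct Rle_dec; first [left; split; lra | right; left; split; lra | right; right; split; lra]. Qed.
Lemma Rmin_spec x y : (x <= y /\ Rmin x y = x) \/ (y <= x /\ Rmin x y = y).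
Proof. unfold Rmin; destruct Rle_dec; [left|right]; split; lra. Qed.
Lemma Rmax_spec x y : (x <= y /\ Rmax x y = y) \/ (y <= x /\ Rmax x y = x).
Proof. unfold Rmax; destruct Rle_dec; [left|right]; split; lra. Qed.

Ltac vs := unfold val in *;
  repeat (match goal with
   | |- context [proj1_sig (clamp ?r)] =>
       let E := fresh in destruct (clamp_spec r) as [[? E]|[[? E]|[? E]]]; rewrite E in *; clear E
   | H : context [proj1_sig (clamp ?r)] |- _ =>
       let E := fresh in destruct (clamp_spec r) as [[? E]|[[? E]|[? E]]]; rewrite E in *; clear E
   | |- context [Rmin ?x ?y] =>
       let E := fresh in destruct (Rmin_spec x y) as [[? E]|[? E]]; rewrite E in *; clear E
   | H : context [Rmin ?x ?y] |- _ =>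
       let E := fresh in destruct (Rmin_spec x y) as [[? E]|[? E]]; rewrite E in *; clear E
   | |- context [Rmax ?x ?y] =>
       let E := fresh in destruct (Rmax_spec x y) as [[? E]|[? E]]; rewrite E in *; clear E
   | H : context [Rmax ?x ?y] |- _ =>
       let E := fresh in destruct (Rmax_spec x y) as [[? E]|[? E]]; rewrite E in *; clear E
   end; try (exfalso; lra)); lra.

Section Grp.
Context {X : Type} (OX : (X -> Prop) -> Prop) (x0 : X) (HX : is_topology OX).
Notation loop := (is_loop OX x0).
Notation hom := (homotopic OX x0).

Ltac endside := reflexivity || (apply (loop_end OX x0); [assumption| (left; vs) || (right; vs)]).
Ltac pt := match goal with
  | |- ?f ?x = ?f ?y => apply f_equal; apply II_eq; vs
  | |- _ => transitivity x0; [endside|symmetry; endside]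
  | |- _ => exfalso; vs
  end.
Ltac ptall s := pose proof (val_bnd s); cbv beta delta [Defs.concat reverse const_loop];
  repeat match goal with |- context [Rle_dec ?x ?y] => destruct (Rle_dec x y) end; pt.

Lemma assoc_pt a b c s : loop a -> loop b -> loop c ->
  concat (concat a b) c s =
  concat a (concat b c) (clamp (Rmin (2 * val s) (Rmin (val s + 1/4) ((val s + 1)/2)))).
Proof. intros Ha Hb Hc. ptall s. Qed.


Lemma unit_l_pt a s : loop a ->
  concat (const_loop x0) a s = a (clamp (2 * val s - 1)).
Proof. intros Ha. ptall s. Qed.

Lemma unit_r_pt a s : loop a ->
  concat a (const_loop x0) s = a (clamp (2 * val s)).
Proof. intros Ha. ptall s. Qed.

Lemma inv_r_pt a s : loop a ->
  concat a (reverse a) s = a (clamp (Rmin (2 * val s) (2 - 2 * val s))).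
Proof. intros Ha. ptall s. Qed.

Lemma inv_l_pt a s : loop a ->
  concat (reverse a) a s = a (clamp (Rmax (1 - 2 * val s) (2 * val s - 1))).
Proof. intros Ha. ptall s. Qed.

Lemma hom_ext a b a' b' : hom a b -> (forall s, a s = a' s) -> (forall s, b s = b' s) -> hom a' b'.
Proof.
  intros H E1 E2. replace a' with a by (apply functional_extensionality; auto).
  replace b' with b by (apply functional_extensionality; auto). auto.
Qed.

Lemma hom_uv d u v Lu Lv M : loop d -> lip1 u Lu -> lip1 v Lv -> 0 <= M ->
  (forall s, 0 <= s <= 1 -> Rabs (u s) <= M /\ Rabs (v s) <= M) ->
  u 0 = v 0 -> u 1 = v 1 -> (u 0 = 0 \/ u 0 = 1) -> (u 1 = 0 \/ u 1 = 1) ->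
  hom (fun s => d (clamp (u (val s)))) (fun s => d (clamp (v (val s)))).
Proof.
  intros Hd Hu Hv HM HB E0 E1 F0 F1.
  eapply hom_ext.
  - apply (hom_reparam OX x0 d (fun s t => (1 - t) * u s + t * v s) _ Hd
             (lip_interp u v Lu Lv M Hu Hv HM HB)).
    intros t Ht. cbv beta. rewrite <- E0, <- E1.
    split; apply (loop_end OX x0); auto; rewrite clamp_val.
    + replace ((1 - t) * u 0 + t * u 0) with (u 0) by ring. destruct F0 as [-> | ->]; vs.
    + replace ((1 - t) * u 1 + t * u 1) with (u 1) by ring. destruct F1 as [-> | ->]; vs.
  - intros s. cbv beta. f_equal. f_equal. ring.
  - intros s. cbv beta. f_equal. f_equal. ring.
Qed.

End Grp.

Section PG.
Context {X : Type} (OX : (X -> Prop) -> Prop) (x0 : X) (HX : is_topology OX).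
Notation loop := (is_loop OX x0).
Notation hom := (homotopic OX x0).
Notation pcls := (pcls OX x0).
Notation P := (Pi1 OX x0).

Lemma hcls_eq a b : loop a -> loop b -> hom a b -> hcls OX x0 a = hcls OX x0 b.
Proof.
  intros Ha Hb Hab. apply functional_extensionality; intro c; apply propositional_extensionality.
  unfold hcls; split; intros [Lc Hc]; split; auto.
  - eapply hom_trans; [apply hom_sym, Hab| exact Hc].
  - eapply hom_trans; [exact Hab| exact Hc].
Qed.

Lemma pcls_eq a b : loop a -> loop b -> hom a b -> pcls a = pcls b.
Proof.
  intros Ha Hb Hab. unfold Defs.pcls.
  destruct (excluded_middle_informative (loop a)); [|contradiction].
  destruct (excluded_middle_informative (loop b)); [|contradiction].
  apply eq_sig_hprop; [intros; apply proof_irrelevance|]. simpl. apply hcls_eq; auto.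
Qed.

Lemma prep_spec (p : P) : loop (prep p) /\ proj1_sig p = hcls OX x0 (prep p).
Proof.
  unfold prep. destruct (constructive_indefinite_description _ _) as [a [Ha E]]; simpl; auto.
Qed.

Lemma pcls_val a : loop a -> proj1_sig (pcls a) = hcls OX x0 a.
Proof.
  intros Ha. unfold Defs.pcls. destruct (excluded_middle_informative (loop a)); [|contradiction].
  reflexivity.
Qed.

Lemma pcls_prep (p : P) : pcls (prep p) = p.
Proof.
  destruct (prep_spec p) as [L E]. apply eq_sig_hprop; [intros; apply proof_irrelevance|].
  rewrite pcls_val; auto.
Qed.

Lemma prep_pcls a : loop a -> hom a (prep (pcls a)).
Proof.
  intros Ha. destruct (prep_spec (pcls a)) as [L E].
  assert (Hin : proj1_sig (pcls a) (prep (pcls a))).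
  { rewrite E. split; auto. apply hom_refl; auto. }
  rewrite pcls_val in Hin; auto. destruct Hin; auto.
Qed.

Lemma prep_loop (p : P) : loop (prep p). Proof. apply prep_spec. Qed.

Lemma mul_pcls a b : loop a -> loop b -> pi1_mul (pcls a) (pcls b) = pcls (concat a b).
Proof.
  intros Ha Hb. unfold pi1_mul. apply pcls_eq.
  - apply concat_loop; apply prep_loop.
  - apply concat_loop; auto.
  - apply hom_concat; apply hom_sym, prep_pcls; auto.
Qed.

Lemma mul_pcls_l (p : P) b : loop b -> pi1_mul p (pcls b) = pcls (concat (prep p) b).
Proof. intros Hb. rewrite <- (pcls_prep p) at 1. apply mul_pcls; auto. apply prep_loop. Qed.

Lemma mul_pcls_r a (p : P) : loop a -> pi1_mul (pcls a) p = pcls (concat a (prep p)).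
Proof. intros Ha. rewrite <- (pcls_prep p) at 1. apply mul_pcls; auto. apply prep_loop. Qed.

Ltac lipt' := unfold Rmin, Rmax; repeat destruct Rle_dec; unfold Rabs; repeat destruct Rcase_abs; lra.

Lemma hom_assoc a b c : loop a -> loop b -> loop c ->
  hom (concat (concat a b) c) (concat a (concat b c)).
Proof.
  intros Ha Hb Hc. eapply hom_ext.
  - apply (hom_uv OX x0 (concat a (concat b c))
             (fun s => Rmin (2 * s) (Rmin (s + 1/4) ((s + 1)/2))) (fun s => s) 2 1 1).
    + repeat apply concat_loop; auto.
    + split; [lra|]. intros; lipt'.
    + split; [lra|]. intros; lipt'.
    + lra.
    + intros s Hs; split; lipt'.
    + lipt'.
    + lipt'.
    + left; lipt'.
    + right; lipt'.
  - intros s. symmetry. apply (assoc_pt OX x0); auto.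
  - intros s. cbv beta. rewrite clamp_id. auto.
Qed.

Lemma hom_unit_l a : loop a -> hom (concat (const_loop x0) a) a.
Proof.
  intros Ha. eapply hom_ext.
  - apply (hom_uv OX x0 a (fun s => Rmax 0 (2 * s - 1)) (fun s => s) 2 1 1); auto.
    + split; [lra|]. intros; lipt'.
    + split; [lra|]. intros; lipt'.
    + lra.
    + intros s Hs; split; lipt'.
    + lipt'.
    + lipt'.
    + left; lipt'.
    + right; lipt'.
  - intros s. rewrite (unit_l_pt OX x0); auto. f_equal. apply II_eq. vs.
  - intros s. cbv beta. rewrite clamp_id. auto.
Qed.

Lemma hom_unit_r a : loop a -> hom (concat a (const_loop x0)) a.
Proof.
  intros Ha. eapply hom_ext.
  - apply (hom_uv OX x0 a (fun s => Rmin 1 (2 * s)) (fun s => s) 2 1 1); auto.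
    + split; [lra|]. intros; lipt'.
    + split; [lra|]. intros; lipt'.
    + lra.
    + intros s Hs; split; lipt'.
    + lipt'.
    + lipt'.
    + left; lipt'.
    + right; lipt'.
  - intros s. rewrite (unit_r_pt OX x0); auto. f_equal. apply II_eq. vs.
  - intros s. cbv beta. rewrite clamp_id. auto.
Qed.

Lemma hom_inv_r a : loop a -> hom (concat a (reverse a)) (const_loop x0).
Proof.
  intros Ha. eapply hom_ext.
  - apply (hom_uv OX x0 a (fun s => Rmin (2 * s) (2 - 2 * s)) (fun s => 0) 2 0 2); auto.
    + split; [lra|]. intros; lipt'.
    + split; [lra|]. intros; lipt'.
    + lra.
    + intros s Hs; split; lipt'.
    + lipt'.
    + lipt'.
    + left; lipt'.
    + left; lipt'.
  - intros s. rewrite (inv_r_pt OX x0); auto.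
  - intros s. cbv beta. apply (loop_end OX x0); auto. left. vs.
Qed.

Lemma hom_inv_l a : loop a -> hom (concat (reverse a) a) (const_loop x0).
Proof.
  intros Ha. eapply hom_ext.
  - apply (hom_uv OX x0 a (fun s => Rmax (1 - 2 * s) (2 * s - 1)) (fun s => 1) 2 0 1); auto.
    + split; [lra|]. intros; lipt'.
    + split; [lra|]. intros; lipt'.
    + lra.
    + intros s Hs; split; lipt'.
    + lipt'.
    + lipt'.
    + right; lipt'.
    + right; lipt'.
  - intros s. rewrite (inv_l_pt OX x0); auto.
  - intros s. cbv beta. apply (loop_end OX x0); auto. right. vs.
Qed.

Lemma pi1_group : is_group (@pi1_mul X OX x0) (@pi1_inv X OX x0) (@pi1_one X OX x0).
Proof.
  split; [|split].
  - intros x y z.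
    rewrite <- (pcls_prep x), <- (pcls_prep y), <- (pcls_prep z).
    pose proof (prep_loop x); pose proof (prep_loop y); pose proof (prep_loop z).
    rewrite !mul_pcls; auto; try (apply concat_loop; auto).
    apply pcls_eq; try (repeat apply concat_loop; auto).
    apply hom_sym, hom_assoc; auto.
  - intros x. unfold pi1_one. pose proof (prep_loop x). pose proof (const_loop_ok OX x0).
    split.
    + rewrite mul_pcls_r; auto. rewrite <- (pcls_prep x) at 2. apply pcls_eq; auto.
      apply concat_loop; auto. apply hom_unit_l; auto.
    + rewrite mul_pcls_l; auto. rewrite <- (pcls_prep x) at 2. apply pcls_eq; auto.
      apply concat_loop; auto. apply hom_unit_r; auto.
  - intros x. unfold pi1_inv, pi1_one. pose proof (prep_loop x). pose proof (const_loop_ok OX x0).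
    pose proof (reverse_loop OX x0 _ H).
    split.
    + rewrite mul_pcls_r; auto. apply pcls_eq; auto.
      apply concat_loop; auto. apply hom_inv_l; auto.
    + rewrite mul_pcls_l; auto. apply pcls_eq; auto.
      apply concat_loop; auto. apply hom_inv_r; auto.
Qed.
End PG.

Lemma mc1_cont f : mc1 f -> cont I_open I_open f.
Proof.
  intros Hf V HV. pose proof (proj1 (I_open_iff _) HV) as H.
  apply I_open_iff. intros t Vt. destruct (H _ Vt) as [d1 [Hd1 H1]].
  destruct (Hf t d1 Hd1) as [d [Hd H2]]. exists d; split; auto.
Qed.

Lemma cpt_restr K (C : II -> Prop) : qt_compact I_open K -> I_open (fun t => ~ C t) ->
  qt_compact I_open (fun t => K t /\ C t).
Proof.
  intros HK HC F HF Hcov.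
  destruct (HK (fun U => F U \/ U = (fun t => ~ C t))) as [l [Hl1 Hl2]].
  - intros U [HU| ->]; auto.
  - intros x Kx. destruct (classic (C x)) as [Cx|nCx].
    + destruct (Hcov x (conj Kx Cx)) as [U [FU Ux]]. exists U; auto.
    + exists (fun t => ~ C t); auto.
  - assert (Hl : exists l2, (forall U, In U l2 -> F U) /\
               (forall U, In U l -> F U \/ U = (fun t => ~ C t) -> F U -> In U l2)).
    { clear Hl2. induction l as [|U l IH].
      - exists nil; split; intros ? [].
      - destruct IH as [l2 [A B]]. { intros; apply Hl1; right; auto. }
        destruct (classic (F U)) as [FU|nFU].
        + exists (U :: l2). split.
          * intros V [<-|HV]; auto.
          * intros V [<-|HV] H1 H2; [left; auto| right; apply B; auto].
        + exists l2. split; auto. intros V [<-|HV] H1 H2; [contradiction| apply B; auto]. }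
    destruct Hl as [l2 [A B]]. exists l2. split; auto.
    intros x [Kx Cx]. destruct (Hl2 x Kx) as [U [HU Ux]].
    destruct (Hl1 U HU) as [FU| EU].
    + exists U; split; auto.
    + subst U. contradiction.
Qed.

Lemma cpt_image K f : qt_compact I_open K -> cont I_open I_open f ->
  qt_compact I_open (fun u => exists t, K t /\ u = f t).
Proof.
  intros HK Hf F HF Hcov.
  destruct (HK (fun W => exists U, F U /\ W = (fun t => U (f t)))) as [l [Hl1 Hl2]].
  - intros W [U [FU ->]]. apply Hf; auto.
  - intros t Kt. destruct (Hcov (f t) (ex_intro _ t (conj Kt eq_refl))) as [U [FU Ut]].
    exists (fun t => U (f t)); split; auto. exists U; auto.
  - assert (Hl : exists l2, (forall U, In U l2 -> F U) /\
             (forall W, In W l -> forall t, W t -> exists U, In U l2 /\ U (f t))).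
    { clear Hl2. induction l as [|W l IH].
      - exists nil; split; intros ? [].
      - destruct IH as [l2 [A B]]. { intros; apply Hl1; right; auto. }
        destruct (Hl1 W (or_introl eq_refl)) as [U [FU ->]].
        exists (U :: l2). split.
        + intros V [<-|HV]; auto.
        + intros V [<-|HV] t Vt.
          * exists U; split; [left|]; auto.
          * destruct (B V HV t Vt) as [U' [HU' U't]]. exists U'; split; [right|]; auto. }
    destruct Hl as [l2 [A B]]. exists l2. split; auto.
    intros u [t [Kt ->]]. destruct (Hl2 t Kt) as [W [HW Wt]]. apply (B W HW t Wt).
Qed.

Lemma empty_open {T : Type} (O : (T -> Prop) -> Prop) : is_topology O -> O (fun _ => False).
Proof.
  intros [_ [_ H3]]. eapply top_ext; [|apply (H3 (fun _ => False)); intros; contradiction].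
  intros x; split; [intros [U [[] _]]|intros []].
Qed.

Lemma lt_half_open : I_open (fun t => ~ (1/2 <= val t)).
Proof.
  apply I_open_iff. intros t Ht. exists (1/2 - val t). split; [lra|].
  intros t' H. unfold Rabs in H; destruct Rcase_abs; lra.
Qed.
Lemma gt_half_open : I_open (fun t => ~ (val t <= 1/2)).
Proof.
  apply I_open_iff. intros t Ht. exists (val t - 1/2). split; [lra|].
  intros t' H. unfold Rabs in H; destruct Rcase_abs; lra.
Qed.

Section CO.
Context {X : Type} (OX : (X -> Prop) -> Prop) (x0 : X) (HX : is_topology OX).
Notation loop := (is_loop OX x0).
Notation Om := (Omega OX x0).
Notation pcls := (pcls OX x0).

Lemma CO_top : is_topology (@CO_open X OX x0).
Proof. apply gen_open_top. Qed.

Definition Lw (a : II -> X) (Ha : loop a) (w : Om) : Om :=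
  exist _ (concat a (proj1_sig w)) (concat_loop OX x0 _ _ Ha (proj2_sig w)).
Definition Rw (a : II -> X) (Ha : loop a) (w : Om) : Om :=
  exist _ (concat (proj1_sig w) a) (concat_loop OX x0 _ _ (proj2_sig w) Ha).

Lemma CO_sub K U : qt_compact I_open K -> OX U ->
  @CO_open X OX x0 (fun w : Om => forall t, K t -> U (proj1_sig w t)).
Proof. intros HK HU. apply gen_open_base. exists K, U; auto. Qed.

Lemma CO_left a (Ha : loop a) W : @CO_open X OX x0 W ->
  @CO_open X OX x0 (fun w => W (Lw a Ha w)).
Proof.
  intros HW. refine (cont_gen (@CO_open X OX x0) _ (Lw a Ha) CO_top _ W HW).
  intros V [K [U [HK [HU ->]]]]. simpl.
  destruct (classic (forall t, K t -> val t <= 1/2 -> U (a (clamp (2 * val t))))) as [A|nA].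
  - eapply top_ext; [|apply (CO_sub (fun u => exists t, (K t /\ 1/2 <= val t) /\
                                        u = clamp (2 * val t - 1)) U); auto].
    + intros w. symmetry. split.
      * intros H u [t [[Kt Ht] ->]]. specialize (H t Kt). unfold Defs.concat in H.
        destruct (Rle_dec (proj1_sig t) (1/2)) as [Hle|Hgt].
        -- assert (E : val t = 1/2) by (unfold val in *; lra).
           rewrite (loop_end OX x0 (proj1_sig w)); [| apply (proj2_sig w)| left; vs].
           rewrite (loop_end OX x0 a) in H; auto. right; vs.
        -- exact H.
      * intros H t Kt. unfold Defs.concat.
        destruct (Rle_dec (proj1_sig t) (1/2)) as [Hle|Hgt].
        -- apply A; auto.
        -- apply H. exists t. split; auto. split; auto. unfold val; lra.
    + apply cpt_image.
      * apply cpt_restr; auto. apply lt_half_open.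
      * apply mc1_cont. apply (mc1_lip _ _ lip1_2x1).
  - eapply top_ext; [|apply (empty_open _ CO_top)].
    intros w; split; [contradiction|]. intros H. apply nA. intros t Kt Ht.
    specialize (H t Kt). simpl in H. unfold Defs.concat in H.
    destruct (Rle_dec (proj1_sig t) (1/2)); [auto|unfold val in Ht; lra].
Qed.

Lemma CO_right a (Ha : loop a) W : @CO_open X OX x0 W ->
  @CO_open X OX x0 (fun w => W (Rw a Ha w)).
Proof.
  intros HW. refine (cont_gen (@CO_open X OX x0) _ (Rw a Ha) CO_top _ W HW).
  intros V [K [U [HK [HU ->]]]]. simpl.
  destruct (classic (forall t, K t -> 1/2 <= val t -> U (a (clamp (2 * val t - 1))))) as [A|nA].
  - eapply top_ext; [|apply (CO_sub (fun u => exists t, (K t /\ val t <= 1/2) /\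
                                        u = clamp (2 * val t)) U); auto].
    + intros w. symmetry. split.
      * intros H u [t [[Kt Ht] ->]]. specialize (H t Kt). unfold Defs.concat in H.
        destruct (Rle_dec (proj1_sig t) (1/2)) as [Hle|Hgt].
        -- exact H.
        -- unfold val in Ht; lra.
      * intros H t Kt. unfold Defs.concat.
        destruct (Rle_dec (proj1_sig t) (1/2)) as [Hle|Hgt].
        -- apply H. exists t. split; auto.
        -- destruct (Rle_dec (1/2) (val t)) as [H12|H12]; [|unfold val in *; lra].
           destruct (Req_dec (val t) (1/2)) as [E|E].
           ++ unfold val in E; lra.
           ++ apply A; auto.
    + apply cpt_image.
      * apply cpt_restr; auto. apply gt_half_open.
      * apply mc1_cont. apply (mc1_lip _ _ lip1_2x).
  - eapply top_ext; [|apply (empty_open _ CO_top)].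
    intros w; split; [contradiction|]. intros H. apply nA. intros t Kt Ht.
    specialize (H t Kt). simpl in H. unfold Defs.concat in H.
    destruct (Rle_dec (proj1_sig t) (1/2)) as [Hle|Hgt].
    + assert (E : val t = 1/2) by (unfold val in *; lra).
      rewrite (loop_end OX x0 (proj1_sig w)) in H; [| apply (proj2_sig w)| right; vs].
      rewrite (loop_end OX x0 a); auto. left; vs.
    + exact H.
Qed.

Lemma qtop_top : is_topology (@qtop_open X OX x0).
Proof. exact (pushforward_top _ (fun w : Om => pcls (proj1_sig w)) CO_top). Qed.

Lemma qtop_left p : cont (@qtop_open X OX x0) (@qtop_open X OX x0) (fun y => pi1_mul p y).
Proof.
  intros V HV. unfold qtop_open.
  pose proof (CO_left (prep p) (prep_loop OX x0 p) _ HV) as H.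
  eapply top_ext; [|exact H]. intros w. simpl.
  rewrite (mul_pcls_l OX x0); [tauto|apply (proj2_sig w)].
Qed.

Lemma qtop_right p : cont (@qtop_open X OX x0) (@qtop_open X OX x0) (fun y => pi1_mul y p).
Proof.
  intros V HV. unfold qtop_open.
  pose proof (CO_right (prep p) (prep_loop OX x0 p) _ HV) as H.
  eapply top_ext; [|exact H]. intros w. simpl.
  rewrite (mul_pcls_r OX x0); [tauto|apply (proj2_sig w)].
Qed.
End CO.

Theorem corollary3p9 :
  (forall (G : Type) (mul : G -> G -> G) (inv : G -> G) (e : G)
          (OG : (G -> Prop) -> Prop),
      is_quasitop_group mul inv e OG ->
      forall H : G -> Prop, is_subgroup mul inv e H ->
        (OG H <-> tau_open mul inv e OG H)) /\
  (forall (X : Type) (OX : (X -> Prop) -> Prop) (x0 : X),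
      is_topology OX ->
      forall H : Pi1 OX x0 -> Prop,
        is_subgroup (@pi1_mul X OX x0) (@pi1_inv X OX x0) (@pi1_one X OX x0) H ->
        (@qtop_open X OX x0 H <->
         tau_open (@pi1_mul X OX x0) (@pi1_inv X OX x0) (@pi1_one X OX x0)
                  (@qtop_open X OX x0) H)).
Proof.
  split.
  - intros G mul inv e OG [HG [HT [_ [HL HR]]]] H HH.
    apply (part1_main mul inv e OG HG HT HL HR H HH).
  - intros X OX x0 HX H HH.
    apply (part1_main (@pi1_mul X OX x0) (@pi1_inv X OX x0) (@pi1_one X OX x0)
             (@qtop_open X OX x0) (pi1_group OX x0) (qtop_top OX x0)
             (qtop_left OX x0) (qtop_right OX x0) H HH).
Qed.
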